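(* If $(\lambda,\mu,\nu)$ is a low triple, then $\mathrm{ht}_0^+(\lambda+\mu-\nu)\le2$.
   Context: $\Phi$ is an irreducible reduced root system with basis $\alpha_1,\dots,\alpha_\ell$ numbered as in Bourbaki, fundamental weights $\omega_1,\dots,\omega_\ell$ dual to the simple coroots, weight lattice $\Lambda$, dominant weights $\Lambda^+$; $\mu\le\lambda$ iff $\lambda-\mu$ is a nonnegative integer combination of simple roots. A triple $(\lambda,\mu,\nu)$ of dominant weights is a low triple if (i) whenever $\lambda',\mu'\in\Lambda^+$ with $\lambda'\le\lambda$, $\mu'\le\mu$, $\nu\le\lambda'+\mu'$, then $\lambda'=\lambda$, $\mu'=\mu$; and (ii) $\nu+\sum_{i=1}^\ell\alpha_i\le\lambda+\mu$. Let $I_0\subset\{1,\dots,\ell\}$ be the largest connected set of nodes of the Dynkin diagram containing node $1$ whose subdiagram has only simple edges. For a weight $\lambda=\sum_i a_i\omega_i$ define $\mathrm{ht}_0^+(\lambda)=\sum_{i\in I_0,\,a_i>0}a_i$ if $\Phi$ is not of type $\mathsf F_4$, and, if $\Phi$ is of type $\mathsf F_4$, $\mathrm{ht}_0^+(\lambda)=\max\big(\sum_{i\in\{1,2\},a_i>0}a_i,\ \sum_{i\in\{3,4\},a_i>0}a_i\big)$. *)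

(* Defs.v *)
From mathcomp Require Import all_boot all_order all_algebra.
Set Implicit Arguments. Unset Strict Implicit. Unset Printing Implicit Defensive.
Import Order.TTheory GRing.Theory Num.Theory.
Local Open Scope ring_scope.

(* Irreducible reduced root systems, via the classification (Cartan type). *)
Inductive dynkin := TA of nat | TB of nat | TC of nat | TD of nat
                  | TE6 | TE7 | TE8 | TF4 | TG2.

Definition rank (t : dynkin) : nat :=
  match t with
  | TA n | TB n | TC n | TD n => n
  | TE6 => 6 | TE7 => 7 | TE8 => 8 | TF4 => 4 | TG2 => 2
  end.

(* Standard ranges avoiding coincidences: A_n (n>=1), B_n (n>=2), C_n (n>=3), D_n (n>=4). *)
Definition valid_type (t : dynkin) : bool :=
  match t with
  | TA n => (1 <= n)%N | TB n => (2 <= n)%N | TC n => (3 <= n)%N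
  | TD n => (4 <= n)%N | _ => true
  end.

(* Nodes are numbered 0..rank-1; node k corresponds to Bourbaki's alpha_(k+1). *)
Definition chain (i j : nat) : bool := (i.+1 == j) || (j.+1 == i).

Definition E_edges : seq (nat * nat) :=
  [:: (0,2); (2,3); (3,4); (4,5); (5,6); (6,7); (1,3)]%N.

Definition adj (t : dynkin) (i j : nat) : bool :=
  match t with
  | TD n => (chain i j && (maxn i j <= n - 2)%N)
            || ((minn i j == n - 3)%N && (maxn i j == n - 1)%N)
  | TE6 | TE7 | TE8 => ((i, j) \in E_edges) || ((j, i) \in E_edges)
  | _ => chain i j
  end.

Definition sqlen (t : dynkin) (i : nat) : nat :=
  match t with
  | TB n => if (i < n - 1)%N then 2 else 1
  | TC n => if (i < n - 1)%N then 1 else 2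
  | TF4 => if (i < 2)%N then 2 else 1
  | TG2 => if i == 0%N then 1 else 3
  | _ => 1
  end.

(* Cartan integers <alpha_i, alpha_j^vee> = 2 (alpha_i, alpha_j) / (alpha_j, alpha_j) *)
Definition cartan_nat (t : dynkin) (i j : nat) : int :=
  if i == j then 2
  else if adj t i j then - (Posz (maxn 1 (sqlen t i %/ sqlen t j)))
  else 0.

(* Row i = coordinates of the simple root alpha_i in the basis of fundamental
   weights: alpha_i = sum_j <alpha_i, alpha_j^vee> omega_j. *)
Definition cartan (t : dynkin) : 'M[int]_(rank t) :=
  \matrix_(i, j) cartan_nat t i j.

(* Weights are integer row vectors of coordinates w.r.t. omega_1..omega_l. *)
Notation weight t := 'rV[int]_(rank t).

Definition dominant (t : dynkin) (x : weight t) : Prop :=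
  forall i, 0 <= x 0 i.

Definition dom_le (t : dynkin) (mu lam : weight t) : Prop :=
  exists c : 'rV[int]_(rank t), (forall i, 0 <= c 0 i) /\ lam - mu = c *m cartan t.

Definition sum_simple_roots (t : dynkin) : weight t :=
  const_mx 1 *m cartan t.

Definition low_triple (t : dynkin) (lam mu nu : weight t) : Prop :=
  (forall lam' mu' : weight t, dominant lam' -> dominant mu' ->
     dom_le lam' lam -> dom_le mu' mu -> dom_le nu (lam' + mu') ->
     lam' = lam /\ mu' = mu)
  /\ dom_le (nu + sum_simple_roots t) (lam + mu).

Definition simple_edge (t : dynkin) : rel 'I_(rank t) :=
  fun i j => [&& i != j, cartan t i j == -1 & cartan t j i == -1].

(* I_0: the connected component of node 1 (index 0) in the graph of simple
   edges, i.e. the largest connected set of nodes containing node 1 whose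
   subdiagram has only simple edges (Dynkin diagrams are trees). *)
Definition I0 (t : dynkin) : {set 'I_(rank t)} :=
  [set j | [exists i : 'I_(rank t), (val i == 0%N) && connect (@simple_edge t) i j]].

Definition ht_pos (t : dynkin) (S : pred 'I_(rank t)) (x : weight t) : int :=
  \sum_(i | (i \in S) && (0 < x 0 i)) x 0 i.

Definition is_F4 (t : dynkin) : bool := if t is TF4 then true else false.

Definition ht0p (t : dynkin) (x : weight t) : int :=
  if is_F4 t then
    Num.max (ht_pos [pred i : 'I_(rank t) | (val i < 2)%N] x)
            (ht_pos [pred i : 'I_(rank t) | (2 <= val i < 4)%N] x)
  else ht_pos (mem (I0 t)) x.

(* Main.v *)
Require Import Defs.
From mathcomp Require Import all_boot all_order all_algebra.
From mathcomp Require Import zify ring.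
Set Implicit Arguments. Unset Strict Implicit. Unset Printing Implicit Defensive.
Import Order.TTheory GRing.Theory Num.Theory.
Local Open Scope ring_scope.

Lemma cartanE t (i j : 'I_(rank t)) : cartan t i j = cartan_nat t i j.
Proof. by rewrite mxE. Qed.

Lemma cartan_diag t (i : 'I_(rank t)) : cartan t i i = 2.
Proof. by rewrite cartanE /cartan_nat eqxx. Qed.

Lemma cartan_off t (i j : 'I_(rank t)) : i != j -> cartan t i j <= 0.
Proof.
move=> ne; rewrite cartanE /cartan_nat.
have -> : (nat_of_ord i == nat_of_ord j) = false by apply/negbTE.
by case: ifP => // _; rewrite oppr_le0.
Qed.

Lemma cartan_nz_adj t (i j : 'I_(rank t)) : i != j -> cartan t i j != 0 -> adj t i j.
Proof.
move=> ne; rewrite cartanE /cartan_nat.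
have -> : (nat_of_ord i == nat_of_ord j) = false by apply/negbTE.
by case: ifP => //; rewrite eqxx.
Qed.

Lemma simple_sym t : symmetric (@simple_edge t).
Proof.
move=> i j; rewrite /simple_edge eq_sym.
by case: (j != i) => //=; rewrite andbC.
Qed.

Definition FL t (L : seq 'I_(rank t)) (k : 'I_(rank t)) : int :=
  \sum_(p <- L) cartan t p k.

Lemma FL_notin t (L : seq 'I_(rank t)) k : k \notin L -> FL L k <= 0.
Proof.
rewrite /FL; elim: L => [|p L IH]; first by rewrite big_nil.
rewrite inE negb_or => /andP[nkp nkL]; rewrite big_cons.
by rewrite -[0]addr0 lerD // ?IH // cartan_off // eq_sym.
Qed.

Lemma path_bound t (s : seq 'I_(rank t)) (x : 'I_(rank t)) :
  path (@simple_edge t) x s -> uniq (x :: s) -> forall k,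
  FL (x :: s) k <= (k == x)%:R + (k == last x s)%:R.
Proof.
elim: s x => [|y s IH] x /=.
  move=> _ _ k; rewrite /FL big_seq1.
  case: (eqVneq k x) => [->|nkx]; first by rewrite cartan_diag.
  by rewrite addr0 cartan_off // eq_sym.
move=> /andP[exy pth] /andP[]; rewrite inE negb_or => /andP[nxy nxs] uys k.
have IHk := IH y pth uys.
move: exy; rewrite /simple_edge => /and3P[_ /eqP Axy /eqP Ayx].
rewrite /FL big_cons -/(FL _ _).
case: (eqVneq k x) => [->|nkx].
  rewrite cartan_diag /FL big_cons -/(FL _ _) Ayx.
  have := FL_notin nxs; case: (x == last y s) => /=; lia.
case: (eqVneq k y) => [eky|nky].
  have := IHk k; rewrite eky Axy eqxx /=; case: (y == last y s) => /=; lia.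
have := IHk k; rewrite (negbTE nky) /= => h.
have : x != k by rewrite eq_sym.
move=> /(@cartan_off t x k); lia.
Qed.

Lemma seq_max (T : eqType) (f : T -> nat) (x : T) (s : seq T) :
  exists2 m, m \in x :: s & forall p, p \in x :: s -> (f p <= f m)%N.
Proof.
elim: s x => [|y s IH] x.
  by exists x => [|p]; rewrite ?inE // => /eqP->.
have [m mi mx] := IH y.
case: (leqP (f x) (f m)) => h.
  exists m; first by rewrite inE mi orbT.
  by move=> p; rewrite inE => /orP[/eqP->//|]; apply: mx.
exists x; first by rewrite inE eqxx.
move=> p; rewrite inE => /orP[/eqP->//|/mx]; lia.
Qed.

Lemma path_nb (T : eqType) (e : rel T) (esym : symmetric e) (x : T) s :
  path e x s -> s != [::] -> forall k, k \in x :: s -> exists2 q, q \in x :: s & e k q.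
Proof.
elim: s x => [|y s IH] x //= /andP[exy pth] _ k.
rewrite inE => /orP[/eqP->|ks].
  by exists y => //; rewrite !inE eqxx orbT.
case: s IH pth ks => [|z s] IH pth ks.
  move: ks; rewrite inE => /eqP->; exists x; first by rewrite inE eqxx.
  by rewrite esym.
have [q qi eq] := IH y pth isT k ks.
by exists q => //; rewrite inE qi orbT.
Qed.

Lemma FL_nonzero t (ord : 'I_(rank t) -> nat) : injective ord ->
  (forall p q k : 'I_(rank t), p != k -> q != k -> adj t p k -> adj t q k ->
     (ord p < ord k)%N -> (ord q < ord k)%N -> p = q) ->
  forall x s, path (@simple_edge t) x s -> uniq (x :: s) ->
  exists k, FL (x :: s) k != 0.
Proof.
move=> oinj ogood x s pth us.
have [m mi mx] := seq_max ord x s.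
exists m.
case: (eqVneq s [::]) => [s0|sne].
  by move: mi; rewrite s0 inE => /eqP->; rewrite /FL big_seq1 cartan_diag.
have [q qi emq] := path_nb (@simple_sym t) pth sne mi.
move: (emq); rewrite /simple_edge => /and3P[nmq _ /eqP Aqm].
rewrite /FL (bigD1_seq m) //= big_mkcond /= (bigD1_seq q) //=.
rewrite (eq_sym q m) nmq Aqm big1_seq ?cartan_diag ?addr0 //.
move=> p /andP[npq pi]; case: (eqVneq p m) => //= npm.
apply/eqP; apply: contraNT npq => /(cartan_nz_adj npm) apm.
have ltp : (ord p < ord m)%N.
  by rewrite ltn_neqAle mx // andbT; apply: contra npm => /eqP/oinj->.
have ltq : (ord q < ord m)%N.
  by rewrite ltn_neqAle mx // andbT; apply: contra nmq => /eqP/oinj->.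
have aqm : adj t q m.
  by apply: cartan_nz_adj; [rewrite eq_sym | rewrite Aqm].
by apply/eqP; apply: ogood npm _ apm aqm ltp ltq; rewrite eq_sym.
Qed.

Definition cvec t (L : seq 'I_(rank t)) : 'rV[int]_(rank t) :=
  \sum_(p <- L) delta_mx 0 p.

Lemma cvecE t (L : seq 'I_(rank t)) k : cvec L 0 k = (count_mem k L)%:Z.
Proof.
rewrite /cvec summxE; elim: L => [|p L IH]; first by rewrite big_nil.
rewrite big_cons IH mxE /= eq_sym; case: (k == p) => /=; lia.
Qed.

Lemma cvecA t (L : seq 'I_(rank t)) k : (cvec L *m cartan t) 0 k = FL L k.
Proof.
rewrite /cvec mulmx_suml summxE /FL; apply: eq_bigr => p _.
by rewrite -rowE mxE.
Qed.

Lemma key_contra t (lam mu nu : 'rV[int]_(rank t)) (L : seq 'I_(rank t)) :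
  dominant lam -> dominant mu -> low_triple lam mu nu -> uniq L ->
  (exists k, FL L k != 0) ->
  ((forall k, FL L k <= lam 0 k) \/ (forall k, FL L k <= mu 0 k)) -> False.
Proof.
move=> dl dm [Hi [d [d0 hd]]] uL [k0 nz] Hb.
set c := cvec L.
have c01 : forall k, 0 <= c 0 k <= 1.
  move=> k; rewrite /c cvecE count_uniq_mem //; by case: (k \in L).
have nuS : dom_le nu (lam + mu - c *m cartan t).
  exists (d + const_mx 1 - c); split.
    move=> k; rewrite !mxE; have := d0 k; have := c01 k; move: (c 0 k) (d 0 k) => a b; lia.
  rewrite mulmxBl mulmxDl -hd /sum_simple_roots.
  move: (c *m cartan t) (const_mx 1 *m cartan t) => B S.
  apply/matrixP => i j; rewrite !mxE; ring.
have dle : forall x : 'rV[int]_(rank t), dom_le (x - c *m cartan t) x.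
  move=> x; exists c; split; first by move=> k; have := c01 k; lia.
  by rewrite opprB addrC subrK.
have drefl : forall x : 'rV[int]_(rank t), dom_le x x.
  move=> x; exists 0; split; first by move=> k; rewrite mxE.
  by rewrite subrr mul0mx.
have cAE : forall k, (c *m cartan t) 0 k = FL L k by move=> k; rewrite cvecA.
set B := c *m cartan t in cAE dle nuS *; clearbody B.
case: Hb => Hb.
  have [e _] : lam - B = lam /\ mu = mu.
    apply: Hi => //; last by rewrite addrAC.
    by move=> k; rewrite !mxE cAE; have := Hb k; move: (lam 0 k) (FL L k) => a b; lia.
  have := congr1 (fun M : 'rV[int]_(rank t) => M 0 k0) e.
  rewrite !mxE cAE; move: nz; move: (lam 0 k0) (FL L k0) => a b; lia.
have [_ e] : lam = lam /\ mu - B = mu.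
  apply: Hi => //; last by rewrite addrA.
  by move=> k; rewrite !mxE cAE; have := Hb k; move: (mu 0 k) (FL L k) => a b; lia.
have := congr1 (fun M : 'rV[int]_(rank t) => M 0 k0) e.
rewrite !mxE cAE; move: nz; move: (mu 0 k0) (FL L k0) => a b; lia.
Qed.
Local Close Scope ring_scope.

Definition ordE (k : nat) : nat := nth k [:: 4; 0; 2; 1; 3; 5; 6; 7] k.
Definition ordt (t : dynkin) (k : nat) : nat :=
  match t with TE6 | TE7 | TE8 => ordE k | _ => k end.

Definition ord_good (t : dynkin) : Prop :=
  (forall p q, p < rank t -> q < rank t -> ordt t p = ordt t q -> p = q) /\
  (forall p q k, p < rank t -> q < rank t -> k < rank t -> p != k -> q != k ->
     adj t p k -> adj t q k -> ordt t p < ordt t k -> ordt t q < ordt t k -> p = q).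

Definition chk (t : dynkin) : bool :=
  all (fun p => all (fun q => (ordt t p == ordt t q) ==> (p == q)) (iota 0 (rank t))) (iota 0 (rank t)) &&
  all (fun p => all (fun q => all (fun k =>
     [&& p != k, q != k, adj t p k, adj t q k, ordt t p < ordt t k & ordt t q < ordt t k] ==> (p == q))
     (iota 0 (rank t))) (iota 0 (rank t))) (iota 0 (rank t)).

Lemma chk_sound t : chk t -> ord_good t.
Proof.
move=> /andP[/allP h1 /allP h2]; split.
  move=> p q hp hq e; have := h1 p; rewrite mem_iota hp => /(_ isT) /allP /(_ q).
  by rewrite mem_iota hq e eqxx => /(_ isT) /eqP.
move=> p q k hp hq hk npk nqk apk aqk lp lq.
have := h2 p; rewrite mem_iota hp => /(_ isT) /allP /(_ q); rewrite mem_iota hq => /(_ isT).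
move/allP/(_ k); rewrite mem_iota hk => /(_ isT).
by rewrite npk nqk apk aqk lp lq => /eqP.
Qed.

Lemma chain_good p q k : p != k -> q != k -> chain p k -> chain q k -> p < k -> q < k -> p = q.
Proof. rewrite /chain => ? ? /orP[/eqP ?|/eqP ?] /orP[/eqP ?|/eqP ?]; lia. Qed.

Lemma ordt_goodP t : ord_good t.
Proof.
case: t => [n|n|n|n| | | | |].
- split; first by move=> p q.
  move=> p q k _ _ _; exact: chain_good.
- split; first by move=> p q.
  move=> p q k _ _ _; exact: chain_good.
- split; first by move=> p q.
  move=> p q k _ _ _; exact: chain_good.
- split; first by move=> p q.
  move=> p q k hp hq hk npk nqk /=.
  rewrite /chain => /orP[/andP[/orP[/eqP ?|/eqP ?] ?]|/andP[/eqP ? /eqP ?]]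
                    /orP[/andP[/orP[/eqP ?|/eqP ?] ?]|/andP[/eqP ? /eqP ?]]; lia.
- by apply: chk_sound; vm_compute.
- by apply: chk_sound; vm_compute.
- by apply: chk_sound; vm_compute.
- split; first by move=> p q.
  move=> p q k _ _ _; exact: chain_good.
- split; first by move=> p q.
  move=> p q k _ _ _; exact: chain_good.
Qed.
Local Open Scope ring_scope.

Lemma FL_nz t x s : path (@simple_edge t) x s -> uniq (x :: s) ->
  exists k, FL (x :: s) k != 0.
Proof.
have [oi og] := ordt_goodP t.
apply: (@FL_nonzero t (fun k : 'I_(rank t) => ordt t k)).
  by move=> p q /oi e; apply/val_inj/e.
move=> p q k npk nqk apk aqk lp lq; apply/val_inj/(og p q k) => //.
Qed.

Lemma coord_le1 t (lam mu nu : 'rV[int]_(rank t)) i :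
  dominant lam -> dominant mu -> low_triple lam mu nu ->
  lam 0 i <= 1 /\ mu 0 i <= 1.
Proof.
move=> dl dm lt.
have hb := @path_bound t [::] i isT isT; rewrite /= in hb.
have nz := @FL_nz t i [::] isT isT.
have hk : forall (x : 'rV[int]_(rank t)), dominant x -> 2 <= x 0 i -> forall k, FL [:: i] k <= x 0 k.
  move=> x dx h2 k; have := hb k; have := dx k.
  case: (eqVneq k i) => [->|_] /=; move: (x 0 i) (x 0 k) (FL [:: i] k) h2 => a b c; lia.
split; rewrite leNgt; apply/negP => h.
  apply: (key_contra dl dm lt (L := [:: i])) => //; left; apply: hk => //; move: h; lia.
apply: (key_contra dl dm lt (L := [:: i])) => //; right; apply: hk => //; move: h; lia.
Qed.

Lemma no_pair t (lam mu nu : 'rV[int]_(rank t)) i j :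
  dominant lam -> dominant mu -> low_triple lam mu nu ->
  i != j -> connect (@simple_edge t) i j ->
  ~ ((1 <= lam 0 i /\ 1 <= lam 0 j) \/ (1 <= mu 0 i /\ 1 <= mu 0 j)).
Proof.
move=> dl dm lt nij /connectP[p pth ej].
case/shortenP: pth ej => p' pth' up' _ ej.
have hb := path_bound pth' up'; rewrite -ej in hb.
have nz := FL_nz pth' up'.
have hk : forall (x : 'rV[int]_(rank t)), dominant x -> 1 <= x 0 i -> 1 <= x 0 j ->
    forall k, FL (i :: p') k <= x 0 k.
  move=> x dx h1 h2 k; have := hb k; have := dx k.
  case: (eqVneq k i) => [->|_]; first rewrite (negbTE nij) /=.
    by move: (x 0 i) (FL _ i) h1 => a b; lia.
  case: (eqVneq k j) => [->|_] /=.
    by move: (x 0 j) (FL _ j) h2 => a b; lia.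
  by move: (x 0 k) (FL _ k) => a b; lia.
case=> [[h1 h2]|[h1 h2]].
  by apply: (key_contra dl dm lt up' nz); left; apply: hk.
by apply: (key_contra dl dm lt up' nz); right; apply: hk.
Qed.

Lemma sum_le1 t (S : pred 'I_(rank t)) (f : 'I_(rank t) -> int) :
  (forall i, 0 <= f i <= 1) ->
  (forall i j, S i -> S j -> i != j -> 1 <= f i -> 1 <= f j -> False) ->
  \sum_(i | S i) f i <= 1.
Proof.
move=> f01 hp.
case: (boolP [exists i, S i && (1 <= f i)]) => [/existsP[i /andP[Si fi]]|].
  rewrite (bigD1 i) //= big1 ?addr0; first by have := f01 i; case/andP.
  move=> j /andP[Sj nji]; have := f01 j; case: (lerP 1 (f j)) => h.
    by case: (hp i j Si Sj) => //; rewrite eq_sym.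
  move: h; move: (f j) => a; lia.
rewrite negb_exists => /forallP h; rewrite big1 // => j Sj.
have := h j; rewrite Sj /= -ltNge; have := f01 j; move: (f j) => a; lia.
Qed.

Lemma ht_conn t (lam mu nu : 'rV[int]_(rank t)) (S : pred 'I_(rank t)) :
  dominant lam -> dominant mu -> dominant nu -> low_triple lam mu nu ->
  (forall i j, S i -> S j -> connect (@simple_edge t) i j) ->
  ht_pos S (lam + mu - nu) <= 2.
Proof.
move=> dl dm dn lt con.
have step1 : ht_pos S (lam + mu - nu) <= \sum_(i | S i) (lam 0 i + mu 0 i).
  rewrite /ht_pos [X in _ <= X](bigID (fun i => 0 < (lam + mu - nu) 0 i)) /=.
  rewrite -[X in X <= _]addr0 lerD //.
    apply: ler_sum => i _; rewrite !mxE; have := dn i.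
    by move: (lam 0 i) (mu 0 i) (nu 0 i) => a b c; lia.
  by apply: sumr_ge0 => i _; have := dl i; have := dm i; move: (lam 0 i) (mu 0 i) => a b; lia.
apply: (le_trans step1); rewrite big_split /=.
have -> : (2 : int) = 1 + 1 by [].
apply: lerD; apply: sum_le1.
- by move=> i; rewrite dl; case: (coord_le1 i dl dm lt).
- move=> i j Si Sj nij h1 h2; apply: (no_pair dl dm lt nij (con i j Si Sj)); by left.
- by move=> i; rewrite dm; case: (coord_le1 i dl dm lt).
- move=> i j Si Sj nij h1 h2; apply: (no_pair dl dm lt nij (con i j Si Sj)); by right.
Qed.

Lemma I0_conn t (i j : 'I_(rank t)) : i \in I0 t -> j \in I0 t -> connect (@simple_edge t) i j.
Proof.
rewrite !inE => /existsP[r /andP[/eqP r0 cri]] /existsP[r' /andP[/eqP r0' crj]].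
have e : r = r' by apply/val_inj; rewrite /= r0 r0'.
subst r'; apply: connect_trans crj.
by rewrite (sym_connect_sym (@simple_sym t)).
Qed.

Lemma F4_conn (i j : 'I_(rank TF4)) :
  ((i < 2)%N && (j < 2)%N) || ((2 <= i < 4)%N && (2 <= j < 4)%N) ->
  connect (@simple_edge TF4) i j.
Proof.
case: (eqVneq i j) => [->|nij] h; first exact: connect0.
apply: connect1; move: nij h; rewrite /simple_edge !mxE.
case: i j => [[|[|[|[|?]]]] ?] [[|[|[|[|?]]]] ?] //.
Qed.

Lemma ht_I0 t (lam mu nu : 'rV[int]_(rank t)) :
  dominant lam -> dominant mu -> dominant nu -> low_triple lam mu nu ->
  ht_pos (mem (I0 t)) (lam + mu - nu) <= 2.
Proof.
move=> dl dm dn lt; apply: ht_conn => // i j hi hj.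
by apply: I0_conn.
Qed.

Theorem mainTheorem14 (t : dynkin) (lam mu nu : 'rV[int]_(rank t)) :
  valid_type t ->
  dominant lam -> dominant mu -> dominant nu ->
  low_triple lam mu nu ->
  ht0p (lam + mu - nu) <= 2.
Proof.
move=> _ dl dm dn lt; rewrite /ht0p.
case: t lam mu nu dl dm dn lt => [n|n|n|n| | | | |] lam mu nu dl dm dn lt;
  try exact: ht_I0.
rewrite /=.
set a := ht_pos _ _; set b := ht_pos _ _.
have ha : a <= 2 by apply: ht_conn => // i j /= hi hj; apply: F4_conn; rewrite hi hj.
have hb : b <= 2 by apply: ht_conn => // i j /= hi hj; apply: F4_conn; rewrite hi hj orbT.
by case: (leP a b).
Qed.
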